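(* It holds that $L_{BA}=\begin{pmatrix} 1/w_{BA} & v_{BA}/w_{BA} \\ v_{BA}/w_{BA} & 1/w_{BA} \end{pmatrix}$.
   Context: The model is a discrete one-dimensional environment populated by stateless automata (''elementary bodies''); each time step an elementary body either moves one coordinate unit in its direction or reverses direction. A body is a finite set of elementary bodies; an inertial body is one with constant spatial velocity and constant proper time velocity. For inertial bodies $A,B$, $O_B$ is the reference frame associated with $B$ (events written as column vectors $\begin{pmatrix} x\\ \tau_B\end{pmatrix}$ of space coordinate and proper time of $B$), in which $B$ has coordinate $x_{BB}\equiv 0$ and proper time velocity $1$. $v_{BA}$ and $w_{BA}$ denote the (constant) spatial velocity and proper time velocity of $B$ in the reference frame $O_A$, so that $x_{BA}(\tau_A)=v_{BA}\tau_A$ and $\tau_{BA}(\tau_A)=w_{BA}\tau_A$ when origins coincide. $L_{BA}:O_B\to O_A$ is the map sending coordinates of an event in $O_B$ to its coordinates in $O_A$; coordinates in different inertial frames are related affinely, the origins of $O_A$ and $O_B$ are assumed to coincide, so $L_{BA}$ is linear with matrix $\begin{pmatrix} a_{11} & a_{12} \\ a_{21} & a_{22} \end{pmatrix}$. Since $\begin{pmatrix} 1\\1\end{pmatrix}$ and $\begin{pmatrix} -1\\1\end{pmatrix}$ are eigenvectors of $L_{BA}$ (standard configuration), $a_{11}=a_{22}$ and $a_{12}=a_{21}$. *)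

(* Defs.v *)
From HB Require Import structures.
From mathcomp Require Import all_boot all_order all_algebra.
Set Implicit Arguments. Unset Strict Implicit. Unset Printing Implicit Defensive.
Import Order.TTheory GRing.Theory Num.Theory.
Local Open Scope ring_scope.

(* An event in a reference frame: column vector (x, tau)^T;
   row index 0 = space coordinate, row index 1 = proper time. *)
Definition event {R : pzRingType} (x t : R) : 'cV[R]_2 :=
  \col_(i < 2) (if i == 0 then x else t).

Definition mx2 {R : pzRingType} (a b c d : R) : 'M[R]_2 :=
  \matrix_(i < 2, j < 2)
     (if i == 0 then (if j == 0 then a else b) else (if j == 0 then c else d)).

(* Main.v *)
Require Import Defs.
From HB Require Import structures.
From mathcomp Require Import all_boot all_order all_algebra.
Import Order.TTheory GRing.Theory Num.Theory.
Local Open Scope ring_scope.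

Lemma mul_event (R : realFieldType) (L : 'M[R]_2) x t (i : 'I_2) :
  (L *m event x t) i 0 = L i 0 * x + L i 1 * t.
Proof.
rewrite mxE big_ord_recl big_ord_recl big_ord0 addr0 /event !mxE /=.
by congr (_ * _ + _ * _); apply: congr1; apply: val_inj.
Qed.

Lemma ev0 (R : realFieldType) (x t : R) : event x t 0 0 = x.
Proof. by rewrite /event mxE. Qed.
Lemma ev1 (R : realFieldType) (x t : R) : event x t 1 0 = t.
Proof. by rewrite /event mxE. Qed.

Theorem theorem2 (R : realFieldType) (L : 'M[R]_2) (v w : R)
  (hw : 0 < w)
  (heig1 : exists lam : R, L *m event 1 1 = lam *: event 1 1)
  (heig2 : exists mu : R, L *m event (-1) 1 = mu *: event (-1) 1)
  (hB : forall tA : R, L *m event 0 (w * tA) = event (v * tA) tA) :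
  L = mx2 (1 / w) (v / w) (v / w) (1 / w).
Proof.
have w0 : w != 0 by rewrite gt_eqF.
case: heig1 => lam H1; case: heig2 => mu H2; have H3 := hB 1.
have e1 := congr1 (fun M : 'cV[R]_2 => M 0 0) H1.
have e2 := congr1 (fun M : 'cV[R]_2 => M 1 0) H1.
have e3 := congr1 (fun M : 'cV[R]_2 => M 0 0) H2.
have e4 := congr1 (fun M : 'cV[R]_2 => M 1 0) H2.
have e5 := congr1 (fun M : 'cV[R]_2 => M 0 0) H3.
have e6 := congr1 (fun M : 'cV[R]_2 => M 1 0) H3.
move: e1 e2 e3 e4 e5 e6; rewrite /= !mul_event ?ev0 ?ev1 !mxE ?ev0 ?ev1 /=.
set a := L 0 0; set b := L 0 1; set c := L 1 0; set d := L 1 1.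
rewrite ?mulr1 ?mulr0 ?add0r ?mulrN1 ?mulr1 ?addr0.
move=> e1 e2 e3 e4 e5 e6.
have hb : b = v / w by apply: (mulIf w0); rewrite divfK // mulrC.
have hd : d = 1 / w by apply: (mulIf w0); rewrite divfK // mulrC.
have h1 : a + b = c + d by rewrite e1 e2.
have h2 : - a + b = - (- c + d) by rewrite e3 e4.
have hc : c = b.
  have : (a + b) + (- a + b) = (c + d) + - (- c + d) by rewrite h1 h2.
  rewrite addrACA subrr add0r opprD opprK addrACA subrr addr0 -!mulr2n.
  by move/eqP; rewrite eqrMn2r => /eqP.
have ha : a = d by move: h1; rewrite hc [b + d]addrC => /addIr.
apply/matrixP => i j; rewrite /mx2 !mxE.
case: i => [[|[|//]] Hi]; case: j => [[|[|//]] Hj] /=.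
- have -> : Ordinal Hi = 0 by apply: val_inj.
  have -> : Ordinal Hj = 0 by apply: val_inj.
  by rewrite -/a ha hd.
- have -> : Ordinal Hi = 0 by apply: val_inj.
  have -> : Ordinal Hj = 1 by apply: val_inj.
  by rewrite -/b hb.
- have -> : Ordinal Hi = 1 by apply: val_inj.
  have -> : Ordinal Hj = 0 by apply: val_inj.
  by rewrite -/c hc hb.
- have -> : Ordinal Hi = 1 by apply: val_inj.
  have -> : Ordinal Hj = 1 by apply: val_inj.
  by rewrite -/d hd.
Qed.
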